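(* If for every $k\in\mathbb{N}$ there is a vertex $v_k\in V(G)$ lying on $k$ pairwise edge-disjoint cycles of $G$, then $G$ is $\omega$-evadible.
   Context: Cat Herding is played on a simple, possibly infinite graph $G$. The cat first places its token on a vertex. Then the players alternate, the herder moving first: the herder deletes one edge of the current graph, and then, unless the cat's current vertex has degree $0$ in the current graph, the cat moves its token along a finite path with at least one edge in the current graph to a different vertex. The cat is captured when its vertex has degree $0$ in the current graph. $G$ is $k$-evadible if the cat has a strategy (including its choice of starting vertex) that, against every herder strategy, yields a legal cat move after each of the first $k-1$ edge deletions; $G$ is $\omega$-evadible if it is $k$-evadible for every $k\in\mathbb{N}$. *)

(* Defs.v *)
From Stdlib Require Import List Arith.
Import ListNotations.
Set Implicit Arguments.

Section CatHerding.
Variable V : Type.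

Definition consec (l : list V) (x y : V) : Prop :=
  exists l1 l2, l = l1 ++ x :: y :: l2.

Definition is_path (E : V -> V -> Prop) (l : list V) : Prop :=
  NoDup l /\ 2 <= length l /\ (forall x y, consec l x y -> E x y).

Definition is_cycle (E : V -> V -> Prop) (c : list V) : Prop :=
  match c with
  | [] => False
  | a :: _ => NoDup c /\ 3 <= length c /\
              (forall x y, consec (c ++ [a]) x y -> E x y)
  end.

Definition cycle_edge (c : list V) (x y : V) : Prop :=
  match c with
  | [] => False
  | a :: _ => consec (c ++ [a]) x y \/ consec (c ++ [a]) y x
  end.

(* The current graph: the edges of G (relation adj) minus the deleted
   edges D (a list of ordered pairs, each representing an unordered edge). *)
Definition present (adj : V -> V -> Prop) (D : list (V * V)) (x y : V) : Prop :=
  adj x y /\ ~ In (x, y) D /\ ~ In (y, x) D.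

Definition cat_move (E : V -> V -> Prop) (v w : V) : Prop :=
  exists l, is_path E (v :: l ++ [w]).

(* CatSurvives adj n D v : the cat, sitting at v with edge set D already
   deleted, has a strategy guaranteeing a legal move after each of the next
   n herder deletions (herder deletes any edge of the current graph). *)
Fixpoint CatSurvives (adj : V -> V -> Prop) (n : nat) (D : list (V * V)) (v : V)
  : Prop :=
  match n with
  | 0 => True
  | S n' => forall x y, present adj D x y ->
      exists w, cat_move (present adj ((x, y) :: D)) v w /\
                CatSurvives adj n' ((x, y) :: D) w
  end.

Definition k_evadible (adj : V -> V -> Prop) (k : nat) : Prop :=
  exists v, CatSurvives adj (k - 1) [] v.

Definition omega_evadible (adj : V -> V -> Prop) : Prop :=
  forall k, k_evadible adj k.

Definition on_k_edge_disjoint_cycles (adj : V -> V -> Prop) (v : V) (k : nat)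
  : Prop :=
  exists cs : list (list V),
    length cs = k /\
    (forall c, In c cs -> is_cycle adj c /\ In v c) /\
    (forall i j, i < j < k -> forall x y,
        ~ (cycle_edge (nth i cs []) x y /\ cycle_edge (nth j cs []) x y)).

End CatHerding.

(* Main.v *)
Require Import Defs.
From Stdlib Require Import List Arith Lia Permutation Classical.
Import ListNotations.

Lemma consec_app (V : Type) (l m : list V) x y :
  consec (l ++ m) x y <-> consec l x y \/ consec m x y \/
    ((exists l', l = l' ++ [x]) /\ (exists m', m = y :: m')).
Proof.
  unfold consec; split.
  - intros [l1 [l2 E]]. destruct (app_eq_app _ _ _ _ E) as [l' [[E1 E2]|[E1 E2]]].
    + destruct l' as [|a [|b l'']].
      * simpl in E2. right; left. exists [], l2. simpl; auto.
      * simpl in E2. inversion E2; subst. right; right. split; eauto.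
      * simpl in E2. inversion E2; subst. left. exists l1, l''. reflexivity.
    + right; left. subst. exists l', l2. reflexivity.
  - intros [[l1 [l2 E]]|[[l1 [l2 E]]|[[l' E1] [m' E2]]]]; subst.
    + exists l1, (l2 ++ m). rewrite <- app_assoc. reflexivity.
    + exists (l ++ l1), l2. rewrite <- app_assoc. reflexivity.
    + exists l', m'. rewrite <- app_assoc. reflexivity.
Qed.

Lemma consec_single (V : Type) (a x y : V) : consec [a] x y <-> False.
Proof.
  unfold consec; split; [|tauto]. intros [l1 [l2 E]].
  destruct l1 as [|b [|c l1]]; simpl in E; inversion E.
Qed.

Lemma head_ex (V : Type) (z y : V) r : (exists m', z :: r = y :: m') <-> y = z.
Proof.
  split. intros [m' E]; inversion E; auto. intros ->; eauto.
Qed.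

Lemma consec_rot (V : Type) (a b : V) p q x y :
  consec ((a :: p) ++ (b :: q) ++ [a]) x y <-> consec ((b :: q) ++ (a :: p) ++ [b]) x y.
Proof.
  rewrite !consec_app, !consec_single, !head_ex.
  assert (H1 : forall (z : V) r, (exists m', (z :: r) ++ [a] = y :: m') <-> y = z).
  { intros z r; apply head_ex. }
  assert (H2 : forall (z : V) r, (exists m', (z :: r) ++ [b] = y :: m') <-> y = z).
  { intros z r; apply head_ex. }
  rewrite H1, H2. tauto.
Qed.

Lemma consec2 (V : Type) (a b x y : V) : consec [a; b] x y -> x = a /\ y = b.
Proof.
  intros [l1 [l2 E]]. destruct l1 as [|c [|d l1]]; simpl in E; inversion E; auto.
  destruct l1; simpl in *; discriminate.
Qed.

Lemma consec_head (V : Type) (a b : V) l : NoDup (a :: l) -> consec (a :: l) a b ->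
  exists l', l = b :: l'.
Proof.
  intros ND [l1 [l2 E]]. destruct l1 as [|c l1]; simpl in E; inversion E; subst; eauto.
  inversion ND; subst. exfalso. apply H1. apply in_or_app. right; left; auto.
Qed.

Lemma consec_last (V : Type) (z a b : V) l : consec (l ++ [z]) a b -> In a l.
Proof.
  intros [l1 [l2 E]]. revert l E. induction l1 as [|c l1 IH]; intros l E.
  - destruct l as [|d l]; simpl in E; inversion E; subst;
      try (destruct l2; discriminate); left; auto.
  - destruct l as [|d l]; simpl in E; inversion E; subst.
    + destruct l1; discriminate.
    + right. eauto.
Qed.

Lemma consec_cons (V : Type) (c : V) l x y : consec l x y -> consec (c :: l) x y.
Proof. intros [l1 [l2 E]]. exists (c :: l1), l2. subst; reflexivity. Qed.
Definition Intact {V : Type} (adj : V -> V -> Prop) (D : list (V * V)) (c : list V) :=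
  forall a b, cycle_edge c a b -> present adj D a b.

Definition GoodCyc {V : Type} (adj : V -> V -> Prop) (v : V) (D : list (V * V)) (c : list V) :=
  is_cycle adj c /\ (exists t, c = v :: t) /\ Intact adj D c.

Inductive Disj {V : Type} : list (list V) -> Prop :=
| Disj0 : Disj []
| DisjC c cs : Disj cs ->
    (forall d, In d cs -> forall a b, ~ (cycle_edge c a b /\ cycle_edge d a b)) ->
    Disj (c :: cs).

Lemma cycle_edge_sym (V : Type) (c : list V) a b : cycle_edge c a b -> cycle_edge c b a.
Proof. destruct c; simpl; tauto. Qed.

Lemma intact_step (V : Type) (adj : V -> V -> Prop) D c x y :
  Intact adj D c -> ~ cycle_edge c x y -> Intact adj ((x, y) :: D) c.
Proof.
  intros HI Hn a b He. destruct (HI a b He) as [Ha [Hb Hc]].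
  split; [exact Ha|]. split; intros [E|E]; try tauto.
  - inversion E; subst. tauto.
  - inversion E; subst. apply Hn. apply cycle_edge_sym; exact He.
Qed.

Lemma cycle_adj (V : Type) (adj : V -> V -> Prop)
  (adj_sym : forall x y, adj x y -> adj y x) c a b :
  is_cycle adj c -> cycle_edge c a b -> adj a b.
Proof.
  destruct c as [|z c]; simpl; [tauto|]. intros [_ [_ HE]] [H1|H1]; auto.
Qed.

Lemma intact_nil (V : Type) (adj : V -> V -> Prop)
  (adj_sym : forall x y, adj x y -> adj y x) c :
  is_cycle adj c -> Intact adj [] c.
Proof.
  intros Hc a b He. split; [eapply cycle_adj; eauto|]. simpl; tauto.
Qed.

Lemma rotation (V : Type) (adj : V -> V -> Prop) (v : V) c :
  is_cycle adj c -> In v c -> exists c', (exists t, c' = v :: t) /\ is_cycle adj c' /\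
    forall a b, cycle_edge c' a b <-> cycle_edge c a b.
Proof.
  intros Hc Hv. destruct (in_split _ _ Hv) as [l1 [l2 E]]. subst c.
  destruct l1 as [|a l1].
  - exists (v :: l2). split; eauto. split; auto. tauto.
  - assert (Hrot : forall x y, consec ((v :: l2 ++ a :: l1) ++ [v]) x y <->
                          consec ((a :: l1 ++ v :: l2) ++ [a]) x y).
    { intros x y.
      replace ((v :: l2 ++ a :: l1) ++ [v]) with ((v :: l2) ++ (a :: l1) ++ [v])
        by (simpl; rewrite <- app_assoc; reflexivity).
      replace ((a :: l1 ++ v :: l2) ++ [a]) with ((a :: l1) ++ (v :: l2) ++ [a])
        by (simpl; rewrite <- app_assoc; reflexivity).
      symmetry. apply consec_rot. }
    exists (v :: l2 ++ a :: l1). split; eauto. split.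
    + simpl in Hc |- *. destruct Hc as [ND [Hl HE]]. split; [|split].
      * apply (Permutation_NoDup (l := (a :: l1) ++ (v :: l2))); [|exact ND].
        apply Permutation_app_comm.
      * rewrite length_app in *. simpl in *. lia.
      * intros x y Hxy. apply HE. apply Hrot. exact Hxy.
    + intros x y. simpl. rewrite !Hrot. tauto.
Qed.

Lemma filter_step (V : Type) (adj : V -> V -> Prop) v D cs x y :
  Disj cs -> (forall c, In c cs -> GoodCyc adj v D c) ->
  exists cs', incl cs' cs /\ length cs <= S (length cs') /\ Disj cs' /\
    forall c, In c cs' -> GoodCyc adj v ((x, y) :: D) c.
Proof.
  induction cs as [|c cs IH]; intros Hd Hg.
  - exists []. split; [intros ? []|]. split; [simpl; lia|]. split; [apply Disj0|intros ? []].
  - inversion Hd as [|c0 cs0 Hd0 Hdc]; subst.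
    destruct (classic (cycle_edge c x y)) as [Hce|Hce].
    + exists cs. split; [intros z Hz; right; exact Hz|]. split; [simpl; lia|].
      split; [exact Hd0|]. intros d Hdin. destruct (Hg d (or_intror Hdin)) as [A [B C]].
      split; [exact A|]. split; [exact B|]. apply intact_step; auto.
      intros Hdxy. apply (Hdc d Hdin x y). auto.
    + destruct IH as [cs' [Hinc [Hlen [Hd' Hg']]]]; auto.
      { intros z Hz; apply Hg; right; exact Hz. }
      exists (c :: cs'). split; [intros z [Hz|Hz]; [left; auto|right; auto]|].
      split; [simpl; lia|]. split.
      * apply DisjC; auto.
      * intros z [Hz|Hz]; [subst z|auto].
        destruct (Hg c (or_introl eq_refl)) as [A [B C]].
        split; [exact A|]. split; [exact B|]. apply intact_step; auto.
Qed.

Lemma build (V : Type) (adj : V -> V -> Prop)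
  (adj_sym : forall x y, adj x y -> adj y x) v cs :
  (forall c, In c cs -> is_cycle adj c /\ In v c) ->
  (forall i j, i < j < length cs -> forall x y,
        ~ (cycle_edge (nth i cs []) x y /\ cycle_edge (nth j cs []) x y)) ->
  exists cs', length cs' = length cs /\ Disj cs' /\
    forall c', In c' cs' -> GoodCyc adj v [] c' /\
      exists c, In c cs /\ forall a b, cycle_edge c' a b <-> cycle_edge c a b.
Proof.
  induction cs as [|c cs IH]; intros Hc Hdis.
  - exists []. simpl. split; auto. split; [apply Disj0|intros ? []].
  - destruct IH as [cs' [Hl [Hd Hg]]].
    { intros z Hz; apply Hc; right; exact Hz. }
    { intros i j Hij x y. apply (Hdis (S i) (S j)). simpl; lia. }
    destruct (Hc c (or_introl eq_refl)) as [Hcc Hvc].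
    destruct (rotation V adj v c Hcc Hvc) as [c0 [Hh [Hc0 Hiff]]].
    exists (c0 :: cs'). split; [simpl; lia|]. split.
    + apply DisjC; auto. intros d' Hd' a b [H1 H2].
      destruct (Hg d' Hd') as [_ [d [Hdin Hdiff]]].
      destruct (In_nth _ _ [] Hdin) as [j [Hj Hnth]].
      apply (Hdis 0 (S j)) with a b; [simpl; lia|]. simpl. rewrite Hnth.
      split; [apply Hiff; exact H1|apply Hdiff; exact H2].
    + intros z [Hz|Hz].
      * subst z. split; [split; [exact Hc0|split; [exact Hh|apply intact_nil; auto]]|].
        exists c. split; [left; auto|exact Hiff].
      * destruct (Hg z Hz) as [A [d [B C]]]. split; [exact A|]. exists d. split; [right; auto|exact C].
Qed.

Definition Inv {V : Type} (adj : V -> V -> Prop) (v : V) (n : nat) (D : list (V * V)) (w : V) :=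
  exists cs, n < length cs /\ Disj cs /\ (forall c, In c cs -> GoodCyc adj v D c) /\
    (w = v \/ exists t, In (v :: w :: t) cs).

Lemma long_path_facts (V : Type) (v w : V) t a b :
  NoDup (v :: w :: t) -> 1 <= length t -> consec (w :: t ++ [v]) a b ->
  a <> v /\ ~ (a = w /\ b = v).
Proof.
  intros ND Hlt Hc. assert (NDw : ~ In v (w :: t)) by (inversion ND; auto).
  split.
  - intros ->. apply NDw. eapply consec_last. exact Hc.
  - intros [-> ->].
    assert (ND2 : NoDup (w :: t ++ [v])).
    { apply (Permutation_NoDup (l := [v] ++ (w :: t))); [|exact ND].
      apply (Permutation_app_comm [v] (w :: t)). }
    destruct (consec_head V w v (t ++ [v]) ND2 Hc) as [l' E].
    destruct t as [|z t]; simpl in Hlt; [lia|]. simpl in E. inversion E; subst.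
    apply NDw. right; left; auto.
Qed.

Lemma main_inv (V : Type) (adj : V -> V -> Prop) (v : V) :
  forall n D w, Inv adj v n D w -> CatSurvives adj n D w.
Proof.
  induction n as [|n IHn]; simpl; auto.
  intros D w [cs [Hl [Hd [Hg Hw]]]] x y Hp.
  destruct (filter_step V adj v D cs x y Hd Hg) as [cs' [Hinc [Hlen [Hd' Hg']]]].
  destruct Hw as [->|[t Hin]].
  - destruct cs' as [|c cs'']; [simpl in *; lia|].
    destruct (Hg' c (or_introl eq_refl)) as [Hc [[t' ->] HI]].
    destruct Hc as [ND [Hlt HE]].
    destruct t' as [|u t'']; [simpl in Hlt; lia|].
    exists u. split.
    + exists []. simpl. split; [|split].
      * constructor; [|constructor; [intros []|constructor]].
        intros [E|[]]. subst. inversion ND; subst. apply H1; left; auto.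
      * simpl; lia.
      * intros a b Hab. destruct (consec2 _ _ _ _ _ Hab) as [-> ->]. apply HI.
        left. exists [], (t'' ++ [v]). reflexivity.
    + apply IHn. exists ((v :: u :: t'') :: cs''). split; [simpl in *; lia|]. split; [exact Hd'|].
      split; [exact Hg'|]. right. exists t''. left. reflexivity.
  - destruct (Hg _ Hin) as [Hc [_ HI]].
    assert (HC := Hc). destruct HC as [ND [Hlt HE]].
    exists v. split.
    + destruct (classic ((x = w /\ y = v) \/ (x = v /\ y = w))) as [Hxy|Hxy].
      * exists t. split; [|split].
        -- apply (Permutation_NoDup (l := [v] ++ (w :: t))); [|exact ND].
           apply (Permutation_app_comm [v] (w :: t)).
        -- simpl. rewrite length_app. simpl. lia.
        -- intros a b Hab.
           destruct (long_path_facts V v w t a b ND ltac:(simpl in Hlt; lia) Hab) as [Hav Haw].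
           assert (Hce : cycle_edge (v :: w :: t) a b).
           { left. apply consec_cons. exact Hab. }
           destruct (HI a b Hce) as [Ha [Hb1 Hb2]].
           split; [exact Ha|]. split; intros [E|E]; try tauto; inversion E; subst;
             destruct Hxy as [[? ?]|[? ?]]; subst; tauto.
      * exists []. simpl. split; [|split].
        -- constructor; [|constructor; [intros []|constructor]].
           intros [E|[]]. subst. inversion ND; subst. apply H1; left; auto.
        -- simpl; lia.
        -- intros a b Hab. destruct (consec2 _ _ _ _ _ Hab) as [-> ->].
           assert (Hce : cycle_edge (v :: w :: t) w v).
           { right. exists [], (t ++ [v]). reflexivity. }
           destruct (HI w v Hce) as [Ha [Hb1 Hb2]].
           split; [exact Ha|]. split; intros [E|E]; try tauto; inversion E; subst; tauto.
    + apply IHn. exists cs'. split; [lia|]. split; [exact Hd'|]. split; [exact Hg'|].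
      left; reflexivity.
Qed.

Theorem mainTheorem17 (V : Type) (adj : V -> V -> Prop)
  (adj_sym : forall x y, adj x y -> adj y x)
  (adj_irrefl : forall x, ~ adj x x)
  (H : forall k : nat, exists v : V, on_k_edge_disjoint_cycles adj v k) :
  omega_evadible adj.
Proof.
  intros k. destruct (H (S (k - 1))) as [v [cs [Hl [Hc Hdis]]]].
  rewrite <- Hl in Hdis.
  destruct (build V adj adj_sym v cs Hc Hdis) as [cs' [Hl' [Hd Hg]]].
  exists v. apply (main_inv V adj v). exists cs'. split; [lia|]. split; [exact Hd|].
  split; [intros c Hin; apply (Hg c Hin)|]. left; reflexivity.
Qed.
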